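(* Let $\kappa > 0$ and let $(X,d)$ be a complete CAT$(\kappa)$ space such that $d(v,w) < \pi/(2\sqrt{\kappa})$ for all $v,w \in X$, and let $f : X \to (-\infty,\infty]$ be a proper, convex and lower semi-continuous function. Let $x \in X$ and suppose there is a sequence of positive real numbers $(\lambda_n)$ with $\lim_{n\to\infty}\lambda_n = \infty$ such that \[ \limsup_{n \to \infty} d(x, J_{\lambda_n} x) < \pi/(2\sqrt{\kappa}). \] Then $(J_\lambda x)_{\lambda > 0}$ converges to a minimum point of $f$ as $\lambda \to \infty$.
   Context: A CAT$(\kappa)$ space ($\kappa>0$) is a metric space in which any two points at distance $<\pi/\sqrt{\kappa}$ are joined by a geodesic and every geodesic triangle of perimeter $<2\pi/\sqrt{\kappa}$ satisfies the CAT$(\kappa)$ comparison inequality with respect to its comparison triangle in the sphere of constant curvature $\kappa$. Writing $(1-t)x+ty$ for the point at distance $t\,d(x,y)$ from $x$ on the geodesic from $x$ to $y$, $f$ is convex if $f((1-t)x+ty) \le (1-t)f(x)+tf(y)$ for all $x,y$, $t\in[0,1]$; proper means not identically $\infty$. For $x \in X$, $\Psi_x : X \to [0,\infty)$ is $\Psi_x(y) = \frac{1}{\kappa\cos(\sqrt{\kappa}\,d(y,x))} - \frac{\cos(\sqrt{\kappa}\,d(y,x))}{\kappa}$, and for $\lambda > 0$ the resolvent is $J_\lambda x = J^f_\lambda(x) = \operatorname{argmin}_{y \in X}\left[f(y) + \frac{1}{\lambda}\Psi_x(y)\right]$, which exists and is unique under the stated assumptions. *)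

(* Defs.v *)
From mathcomp Require Import all_boot all_order all_algebra.
From mathcomp Require Import all_classical all_reals all_analysis.
Set Implicit Arguments. Unset Strict Implicit. Unset Printing Implicit Defensive.
Import Order.TTheory GRing.Theory Num.Theory.
Local Open Scope ring_scope.

Section Defs.
Variable R : realType.

Definition is_metric (X : Type) (d : X -> X -> R) : Prop :=
  (forall x y, 0 <= d x y) /\ (forall x y, d x y = 0 <-> x = y) /\
  (forall x y, d x y = d y x) /\ (forall x y z, d x z <= d x y + d y z).

Definition cvg_seq (X : Type) (d : X -> X -> R) (u : nat -> X) (x : X) : Prop :=
  forall e : R, 0 < e -> exists N : nat, forall n, (N <= n)%N -> d (u n) x < e.

Definition cauchy_seq (X : Type) (d : X -> X -> R) (u : nat -> X) : Prop :=
  forall e : R, 0 < e -> exists N : nat, forall m n, (N <= m)%N -> (N <= n)%N ->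
    d (u m) (u n) < e.

Definition complete_metric (X : Type) (d : X -> X -> R) : Prop :=
  forall u, cauchy_seq d u -> exists x, cvg_seq d u x.

(** a geodesic from x to y: an isometric map of [0, d x y] (extended arbitrarily
    outside) with endpoints x and y *)
Definition geodesic (X : Type) (d : X -> X -> R) (x y : X) (g : R -> X) : Prop :=
  g 0 = x /\ g (d x y) = y /\
  forall s t, 0 <= s <= d x y -> 0 <= t <= d x y -> d (g s) (g t) = `|s - t|.

(** ** The model space M_kappa^2: the sphere of radius 1/sqrt kappa, realised as
    the unit sphere of R^3 with the intrinsic distance scaled by 1/sqrt kappa *)
Definition R3 := (R * R * R)%type.
Definition dot3 (u v : R3) : R := u.1.1 * v.1.1 + u.1.2 * v.1.2 + u.2 * v.2.
Definition on_sphere (u : R3) : Prop := dot3 u u = 1.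
Definition sphere_dist (kappa : R) (u v : R3) : R := acos (dot3 u v) / Num.sqrt kappa.

Definition cmp_point (kappa : R) (abar bbar : R3) (L s : R) (pbar : R3) : Prop :=
  on_sphere pbar /\ sphere_dist kappa abar pbar = s /\ sphere_dist kappa pbar bbar = L - s.

(** (p, pbar) : p is a point of the geodesic triangle with sides g1 = [x,y],
    g2 = [y,z], g3 = [z,x], and pbar its comparison point in the comparison
    triangle (xbar, ybar, zbar) *)
Definition tri_point (X : Type) (d : X -> X -> R) (kappa : R) (x y z : X)
    (g1 g2 g3 : R -> X) (xb yb zb : R3) (p : X) (pb : R3) : Prop :=
  (exists2 s, 0 <= s <= d x y & p = g1 s /\ cmp_point kappa xb yb (d x y) s pb) \/
  (exists2 s, 0 <= s <= d y z & p = g2 s /\ cmp_point kappa yb zb (d y z) s pb) \/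
  (exists2 s, 0 <= s <= d z x & p = g3 s /\ cmp_point kappa zb xb (d z x) s pb).

Definition CAT (kappa : R) (X : Type) (d : X -> X -> R) : Prop :=
  (forall x y, d x y < pi / Num.sqrt kappa -> exists g, geodesic d x y g) /\
  (forall (x y z : X) (g1 g2 g3 : R -> X),
     geodesic d x y g1 -> geodesic d y z g2 -> geodesic d z x g3 ->
     d x y + d y z + d z x < 2 * pi / Num.sqrt kappa ->
     exists xb yb zb : R3,
       [/\ on_sphere xb, on_sphere yb, on_sphere zb &
           [/\ sphere_dist kappa xb yb = d x y, sphere_dist kappa yb zb = d y z &
           sphere_dist kappa zb xb = d z x]] /\
           (forall p pb q qb,
             tri_point d kappa x y z g1 g2 g3 xb yb zb p pb ->
             tri_point d kappa x y z g1 g2 g3 xb yb zb q qb ->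
             d p q <= sphere_dist kappa pb qb)).

Local Open Scope ereal_scope.

Definition proper_fun (X : Type) (f : X -> \bar R) : Prop :=
  (forall x, f x != -oo) /\ exists x, f x != +oo.

Definition convex_fun (X : Type) (d : X -> X -> R) (f : X -> \bar R) : Prop :=
  forall x y g, geodesic d x y g -> forall t : R, (0 <= t <= 1)%R ->
    f (g (t * d x y)%R) <= (1 - t)%:E * f x + t%:E * f y.

Definition lsc_fun (X : Type) (d : X -> X -> R) (f : X -> \bar R) : Prop :=
  forall u x, cvg_seq d u x -> f x <= limn_einf (fun n => f (u n)).

Local Close Scope ereal_scope.

Definition Psi (kappa : R) (X : Type) (d : X -> X -> R) (x y : X) : R :=
  1 / (kappa * cos (Num.sqrt kappa * d y x)) - cos (Num.sqrt kappa * d y x) / kappa.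

Definition is_resolvent (kappa : R) (X : Type) (d : X -> X -> R) (f : X -> \bar R)
    (lambda : R) (x y : X) : Prop :=
  forall w, (f y + (Psi kappa d x y / lambda)%:E <= f w + (Psi kappa d x w / lambda)%:E)%E.

Definition is_minimum_point (X : Type) (f : X -> \bar R) (z : X) : Prop :=
  forall w, (f z <= f w)%E.

End Defs.

(* Main.v *)
Require Import Defs.
From mathcomp Require Import all_boot all_order all_algebra.
From mathcomp Require Import all_classical all_reals all_analysis.
From mathcomp Require Import ring lra.
Import Order.TTheory GRing.Theory Num.Theory numFieldNormedType.Exports.
Local Open Scope classical_set_scope.
Local Open Scope ring_scope.
Set Implicit Arguments. Unset Strict Implicit. Unset Printing Implicit Defensive.

Section Helpers.
Variable R : realType.

Lemma cos_le_anti (a b : R) : 0 <= a -> a <= b -> b <= pi -> cos b <= cos a.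
Proof.
move=> a0 ab bpi.
have ia : a \in `[0, pi] by rewrite in_itv /= a0 (le_trans ab bpi).
have ib : b \in `[0, pi] by rewrite in_itv /= (le_trans a0 ab) bpi.
by rewrite leNgt (ltr_cos ib ia) -leNgt.
Qed.

Lemma cos_lt_inv (a b : R) : 0 <= a <= pi -> 0 <= b <= pi -> cos a < cos b -> b < a.
Proof.
move=> ia ib.
have ia' : a \in `[0, pi] by rewrite in_itv /=.
have ib' : b \in `[0, pi] by rewrite in_itv /=.
by rewrite (ltr_cos ib' ia').
Qed.

Lemma cos_lt (a b : R) : 0 <= a -> a < b -> b <= pi -> cos b < cos a.
Proof.
move=> a0 ab bpi.
have ia : a \in `[0, pi] by rewrite in_itv /= a0 (le_trans (ltW ab) bpi).
have ib : b \in `[0, pi] by rewrite in_itv /= (le_trans a0 (ltW ab)) bpi.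
by rewrite (ltr_cos ia ib).
Qed.

Lemma dot3C (u v : R3 R) : dot3 u v = dot3 v u.
Proof. by case: u => [[a b] c]; case: v => [[a' b'] c']; rewrite /dot3 /=; ring. Qed.

Lemma dot3_bound (u v : R3 R) : on_sphere u -> on_sphere v -> -1 <= dot3 u v <= 1.
Proof.
case: u => [[a b] c]; case: v => [[a' b'] c']; rewrite /on_sphere /dot3 /= => hu hv.
have h1 : 0 <= (a - a') ^+ 2 + (b - b') ^+ 2 + (c - c') ^+ 2.
  by rewrite !addr_ge0 // sqr_ge0.
have h2 : 0 <= (a + a') ^+ 2 + (b + b') ^+ 2 + (c + c') ^+ 2.
  by rewrite !addr_ge0 // sqr_ge0.
apply/andP; split; nra.
Qed.

Definition vmid (k : R) (u v : R3 R) : R3 R :=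
  ((k * (u.1.1 + v.1.1), k * (u.1.2 + v.1.2)), k * (u.2 + v.2)).

Lemma dot3_vmid_l k u v w : dot3 (vmid k u v) w = k * (dot3 u w + dot3 v w).
Proof. by rewrite /dot3 /vmid /=; ring. Qed.

Lemma dot3_vmid_r k u v w : dot3 w (vmid k u v) = k * (dot3 w u + dot3 w v).
Proof. by rewrite /dot3 /vmid /=; ring. Qed.

Lemma dot3_vmid k u v : dot3 (vmid k u v) (vmid k u v) =
  k ^+ 2 * (dot3 u u + 2 * dot3 u v + dot3 v v).
Proof. by rewrite /dot3 /vmid /=; ring. Qed.

Lemma sphere_cos (kappa : R) (u v : R3 R) t : 0 < kappa ->
  on_sphere u -> on_sphere v -> sphere_dist kappa u v = t ->
  dot3 u v = cos (Num.sqrt kappa * t).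
Proof.
move=> k0 hu hv <-; rewrite /sphere_dist.
have s0 : 0 < Num.sqrt kappa by rewrite sqrtr_gt0.
rewrite mulrC divfK ?gt_eqF // acosK //.
by have := dot3_bound hu hv; rewrite in_itv /=.
Qed.

Lemma h_ge0 (k a : R) : 0 < k -> 0 < a -> a <= 1 -> 0 <= 1 / (k * a) - a / k.
Proof.
move=> k0 a0 a1.
have -> : 1 / (k * a) - a / k = (1 - a ^+ 2) / (k * a).
  by field; apply/andP; split; rewrite gt_eqF.
apply: divr_ge0; last by apply: mulr_ge0; apply: ltW.
nra.
Qed.

Lemma h_anti (k a b : R) : 0 < k -> 0 < a -> 0 < b ->
  1 / (k * a) - a / k <= 1 / (k * b) - b / k -> b <= a.
Proof.
move=> k0 a0 b0 H; rewrite leNgt; apply/negP => ab.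
have E : (1 / (k * a) - a / k) - (1 / (k * b) - b / k) =
  (b - a) * (1 / (k * a * b) + 1 / k).
  by field; rewrite !gt_eqF.
have : 0 < (b - a) * (1 / (k * a * b) + 1 / k).
  apply: mulr_gt0; first by rewrite subr_gt0.
  apply: addr_gt0; apply: divr_gt0 => //; apply: mulr_gt0 => //; exact: mulr_gt0.
rewrite -E; lra.
Qed.

End Helpers.

Theorem mainTheorem4 (R : realType) (kappa : R) (X : Type) (d : X -> X -> R)
    (f : X -> \bar R) (J : R -> X) (x : X) (lam : nat -> R) :
  0 < kappa ->
  is_metric d -> complete_metric d -> CAT kappa d ->
  (forall v w, d v w < pi / (2 * Num.sqrt kappa)) ->
  proper_fun f -> convex_fun d f -> lsc_fun d f ->
  (* J lambda = J_lambda x, the resolvent of f at x, for all lambda > 0 *)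
  (forall lambda, 0 < lambda -> is_resolvent kappa d f lambda x (J lambda)) ->
  (forall n, 0 < lam n) ->
  lam @ \oo --> +oo ->
  (limn_sup (fun n => d x (J (lam n))) < pi / (2 * Num.sqrt kappa)) ->
  exists z : X, is_minimum_point f z /\
    (forall e : R, 0 < e -> exists M : R, forall lambda : R, M < lambda ->
       d (J lambda) z < e).
Proof.
move=> k0 [d0 [dE [dC dT]]] complete [geo cat] diam [fnN [w0 fw0]] fconv flsc
  res lam0 lamoo limsup.
have s0 : 0 < Num.sqrt kappa by rewrite sqrtr_gt0.
have sd v w : 0 <= Num.sqrt kappa * d v w < pi / 2.
  apply/andP; split; first by rewrite mulr_ge0 // ltW.
  have := diam v w => H.
  have -> : pi / 2 = Num.sqrt kappa * (pi / (2 * Num.sqrt kappa)).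
    by field; rewrite gt_eqF.
  by rewrite ltr_pM2l.
have pi0 := @pi_gt0 R.
have dpi v w : d v w < pi / Num.sqrt kappa.
  apply: (lt_le_trans (diam v w)).
  have -> : pi / (2 * Num.sqrt kappa) = (pi / Num.sqrt kappa) / 2.
    by field; rewrite gt_eqF.
  have : 0 < pi / Num.sqrt kappa by exact: divr_gt0.
  lra.
pose c v := cos (Num.sqrt kappa * d v x).
have cpos v : 0 < c v.
  apply: cos_gt0_pihalf; have /andP[h1 h2] := sd v x.
  apply/andP; split => //; apply: lt_le_trans h1; rewrite oppr_lt0; exact: divr_gt0.
have cle1 v : c v <= 1 by exact: cos_le1.
have PsiE y : Psi kappa d x y = 1 / (kappa * c y) - c y / kappa by [].
have Psi0 y : 0 <= Psi kappa d x y by rewrite PsiE h_ge0.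
have Psianti y w : Psi kappa d x y <= Psi kappa d x w -> c w <= c y.
  by rewrite !PsiE; apply: h_anti.
have fw0fin : f w0 \is a fin_num by rewrite fin_numE fnN fw0.
have fin l : 0 < l -> f (J l) \is a fin_num.
  move=> l0; rewrite fin_numE fnN /=; have := res l l0 w0.
  rewrite -(fineK fw0fin) -EFinD; case: (f (J l)) => //.
pose F l := fine (f (J l)).
have resR l w : 0 < l -> f w \is a fin_num ->
    F l + Psi kappa d x (J l) / l <= fine (f w) + Psi kappa d x w / l.
  move=> l0 fw; have := res l l0 w.
  by rewrite -(fineK (fin l l0)) -(fineK fw) -!EFinD lee_fin.
have mono l m : 0 < l -> l <= m -> c (J m) <= c (J l) /\ F m <= F l.
  move=> l0; rewrite le_eqVlt => /orP[/eqP <-|lm]; first by split.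
  have m0 : 0 < m by apply: lt_trans lm.
  have h1 := resR l (J m) l0 (fin m m0).
  have h2 := resR m (J l) m0 (fin l l0).
  have ab : m^-1 < l^-1 by rewrite ltf_pV2 ?posrE.
  have b0 : 0 < m^-1 by rewrite invr_gt0.
  have PP : Psi kappa d x (J l) <= Psi kappa d x (J m).
    rewrite -(@ler_pM2r _ (l^-1 - m^-1)) ?subr_gt0 //.
    move: h1 h2; rewrite /F; nra.
  split; first exact: Psianti.
  move: h1 h2; rewrite /F; nra.
have key l m : 0 < l -> l <= m ->
    c (J l) + c (J m) <= 2 * cos (Num.sqrt kappa * (2^-1 * d (J l) (J m))) * c (J l).
  move=> l0 lm; have m0 : 0 < m by apply: lt_le_trans lm.
  have [_ Fml] := mono l m l0 lm.
  set C := d (J l) (J m).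
  set h := cos (Num.sqrt kappa * (2^-1 * C)).
  have [g1 G1] := geo x (J l) (dpi _ _).
  have [g2 G2] := geo (J l) (J m) (dpi _ _).
  have [g3 G3] := geo (J m) x (dpi _ _).
  have perim : d x (J l) + d (J l) (J m) + d (J m) x < 2 * pi / Num.sqrt kappa.
    have := diam x (J l); have := diam (J l) (J m); have := diam (J m) x.
    have -> : pi / (2 * Num.sqrt kappa) = (2 * pi / Num.sqrt kappa) / 4.
      by field; rewrite gt_eqF.
    have : 0 < 2 * pi / Num.sqrt kappa by rewrite divr_gt0 ?mulr_gt0.
    lra.
  have [xb [yb [zb [[ux uy uz [dxy dyz dzx]] cmp]]]] :=
    cat x (J l) (J m) g1 g2 g3 G1 G2 G3 perim.
  set mpt := g2 (2^-1 * C).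
  have fm : (f mpt <= ((1 - 2^-1) * F l + 2^-1 * F m)%:E)%E.
    have := fconv (J l) (J m) g2 G2 (2^-1).
    rewrite -(fineK (fin l l0)) -(fineK (fin m m0)) -!EFinM -EFinD; apply.
    apply/andP; split; first by rewrite invr_ge0.
    by rewrite invf_le1 // ler1n.
  have fmfin : f mpt \is a fin_num.
    by rewrite fin_numE fnN /=; move: fm; case: (f mpt).
  have Fmpt : fine (f mpt) <= F l.
    move: fm; rewrite -(fineK fmfin) lee_fin; lra.
  have cm : c mpt <= c (J l).
    apply: Psianti.
    have := resR l mpt l0 fmfin.
    have : 0 < l^-1 by rewrite invr_gt0.
    move: Fmpt; nra.
  have sC := sd (J l) (J m).
  have hpos : 0 < h.
    apply: cos_gt0_pihalf; move: sC; rewrite -/C => /andP[h1 h2].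
    have pi2 : 0 < (pi : R) / 2 by rewrite divr_gt0.
    apply/andP; split; nra.
  have cosC : cos (Num.sqrt kappa * C) = 2 * h ^+ 2 - 1.
    have -> : Num.sqrt kappa * C = (Num.sqrt kappa * (2^-1 * C)) *+ 2.
      by rewrite mulr2n; field.
    by rewrite cos_mulr2n mulr_natl.
  have dyz' : dot3 yb zb = cos (Num.sqrt kappa * C) by apply: sphere_cos.
  pose k := (2 * h)^-1.
  have k2h : k * (2 * h) = 1 by rewrite /k mulVf // gt_eqF // mulr_gt0.
  pose qb := vmid k yb zb.
  have uq : on_sphere qb.
    rewrite /on_sphere /qb dot3_vmid uy uz dyz' cosC; nra.
  have dyq : dot3 yb qb = h by rewrite /qb dot3_vmid_r uy dyz' cosC; nra.
  have dqz : dot3 qb zb = h by rewrite /qb dot3_vmid_l uz dyz' cosC; nra.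
  have hC : 0 <= Num.sqrt kappa * (2^-1 * C) <= pi.
    move: sC; rewrite -/C => /andP[h1 h2]; apply/andP; split; nra.
  have acosh : acos h = Num.sqrt kappa * (2^-1 * C).
    by rewrite /h cosK // in_itv /=.
  have sdyq : sphere_dist kappa yb qb = 2^-1 * C.
    by rewrite /sphere_dist dyq acosh mulrC mulKf // gt_eqF.
  have sdqz : sphere_dist kappa qb zb = C - 2^-1 * C.
    by rewrite /sphere_dist dqz acosh mulrC mulKf ?gt_eqF //; field.
  have tp : tri_point d kappa x (J l) (J m) g1 g2 g3 xb yb zb x xb.
    left; exists 0; first by rewrite lexx d0.
    split; first by case: G1.
    split => //; rewrite subr0; split => //.
    by rewrite /sphere_dist ux acos1 mul0r.
  have tq : tri_point d kappa x (J l) (J m) g1 g2 g3 xb yb zb mpt qb.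
    right; left; exists (2^-1 * C).
      have := d0 (J l) (J m); rewrite -/C => C0.
      apply/andP; split; nra.
    by split => //.
  have Hxm := cmp _ _ _ _ tp tq.
  have dxq : dot3 xb qb = k * (c (J l) + c (J m)).
    rewrite /qb dot3_vmid_r.
    rewrite (sphere_cos k0 ux uy dxy) (dot3C xb zb) (sphere_cos k0 uz ux dzx).
    by rewrite /c (dC x (J l)).
  have bq := dot3_bound ux uq.
  have : dot3 xb qb <= c mpt.
    rewrite /c (dC mpt x) -[X in X <= _](acosK (x:=dot3 xb qb)); last first.
      by rewrite in_itv /=.
    apply: cos_le_anti; first by rewrite mulr_ge0 // ltW.
      move: Hxm; rewrite /sphere_dist ler_pdivlMr // mulrC //.
    exact: acos_lepi.
  rewrite dxq => H.
  have : k * (c (J l) + c (J m)) <= c (J l) by apply: le_trans cm.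
  move=> H2.
  have -> : c (J l) + c (J m) = 2 * h * (k * (c (J l) + c (J m))).
    by rewrite mulrA [2 * h * k]mulrC k2h mul1r.
  by rewrite ler_pM2l ?mulr_gt0.
have lamev A : exists N, forall n, (N <= n)%N -> A <= lam n.
  have [N _ HN] := (cvgryPge lam).1 lamoo A.
  by exists N => n Nn; apply: HN.
pose D := pi / (2 * Num.sqrt kappa).
pose u n := d x (J (lam n)).
have ubd : bounded_fun u.
  exists D; split; first exact: num_real.
  move=> M DM n _ /=; rewrite ger0_norm; last exact: d0.
  exact/ltW/(lt_trans (diam _ _) DM).
have urng : has_ubound (range u).
  by exists D => y [k _ <-]; exact/ltW/diam.
move: limsup; rewrite -/u -/D (limn_supE ubd) => limsup.
pose r' := (inf (range (sups u)) + D) / 2.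
have [_ [N _ <-] HN] : exists2 y, range (sups u) y & y < r'.
  apply: inf_lt; first by exists (sups u 0); exists 0%N.
  rewrite /r'; lra.
have uN n : (N <= n)%N -> u n < r'.
  move=> Nn; apply: le_lt_trans HN; rewrite /sups /=.
  apply: ub_le_sup; first exact: has_ubound_sdrop.
  by exists n.
have r'0 : 0 <= r' by apply: le_trans (ltW (uN N (leqnn N))); exact: d0.
have r'D : r' < D by rewrite /r'; lra.
pose L0 := cos (Num.sqrt kappa * r').
have sr' : 0 <= Num.sqrt kappa * r' < pi / 2.
  apply/andP; split; first by rewrite mulr_ge0 // ltW.
  have -> : pi / 2 = Num.sqrt kappa * D.
    by rewrite /D; field; rewrite gt_eqF.
  by rewrite ltr_pM2l.
have L00 : 0 < L0.
  apply: cos_gt0_pihalf; have /andP[h1 h2] := sr'.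
  apply/andP; split => //; apply: lt_le_trans h1; rewrite oppr_lt0; exact: divr_gt0.
have L0le l : 0 < l -> L0 <= c (J l).
  move=> l0; have [N' HN'] := lamev l.
  pose n := maxn N N'.
  have [cle _] := mono l (lam n) l0 (HN' n (leq_maxr _ _)).
  apply: le_trans cle; rewrite /c /L0.
  apply: cos_le_anti; first by rewrite mulr_ge0 // ltW.
    rewrite ler_pM2l // dC; exact/ltW/uN/leq_maxl.
  have /andP[_ h2] := sr'; have : pi / 2 <= (pi : R) by rewrite ler_pdivrMr //; lra.
  lra.
pose S := [set y | exists2 l, 0 < l & c (J l) = y].
have S0 : S !=set0 by exists (c (J 1)); exists 1.
have Slb : lbound S L0 by move=> y [l l0 <-]; exact: L0le.
have hinf : has_inf S by split => //; exists L0.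
pose io := inf S.
have io0 : 0 < io by apply: lt_le_trans L00 _; exact: lb_le_inf.
have iole l : 0 < l -> io <= c (J l).
  by move=> l0; apply: ge_inf; [exists L0 | exists l].
have cauchy e : 0 < e -> exists2 M, 0 < M &
    forall l m, M <= l -> M <= m -> d (J l) (J m) < e.
  move=> e0.
  pose e1 := Num.min (Num.sqrt kappa * e / 2) 1.
  have e10 : 0 < e1 by rewrite lt_min ltr01 andbT divr_gt0 ?mulr_gt0.
  have e1le : e1 <= Num.sqrt kappa * e / 2 by rewrite ge_min lexx.
  have e1pi : e1 <= pi.
    rewrite ge_min; apply/orP; right.
    have := @pi_ge2 R; lra.
  pose q := 2 * cos e1 - 1.
  have q1 : q < 1.
    have : cos e1 < cos 0 by apply: cos_lt.
    rewrite cos0 /q; lra.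
  pose dl := io * (1 - q) / 2.
  have dl0 : 0 < dl by rewrite /dl divr_gt0 // mulr_gt0 // subr_gt0.
  have [y [l0 l0pos <-] yl] := inf_adherent dl0 hinf.
  exists l0 => // l m l0l l0m.
  wlog lm : l m l0l l0m / l <= m.
    move=> H; case: (leP l m) => [lm|ml]; first exact: H.
    by rewrite dC; apply: H => //; apply: ltW.
  have lpos : 0 < l by apply: lt_le_trans l0l.
  have mpos : 0 < m by apply: lt_le_trans lm.
  have kk := key l m lpos lm.
  have [cl _] := mono l0 l l0pos l0l.
  have cm := iole m mpos.
  have cmpos := cpos (J m).
  have clpos := cpos (J l).
  set C := d (J l) (J m) in kk *.
  set h := cos (Num.sqrt kappa * (2^-1 * C)) in kk.
  have hgt : cos e1 < h.
    rewrite ltNge; apply/negP => hle.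
    have : c (J l) + c (J m) <= (q + 1) * c (J l).
      apply: le_trans kk _; rewrite /q.
      have : h * c (J l) <= cos e1 * c (J l) by rewrite ler_pM2r.
      lra.
    rewrite /io in yl cm *.
    case: (leP 0 q) => q0.
      have : q * c (J l) <= q * (inf S + dl) by apply: ler_wpM2l => //; lra.
      rewrite /dl => h1 h2.
      have : inf S * (1 - q) * (1 - q / 2) <= 0 by nra.
      have : 0 < inf S * (1 - q) * (1 - q / 2).
        by rewrite !mulr_gt0 // subr_gt0 //; lra.
      lra.
    nra.
  have sC := sd (J l) (J m); rewrite -/C in sC.
  have : Num.sqrt kappa * (2^-1 * C) < e1.
    apply: cos_lt_inv hgt.
      by rewrite (ltW e10) e1pi.
    move: sC => /andP[h1 h2]; apply/andP; split; first nra.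
    have := @pi_ge2 R; nra.
  move=> H; have : Num.sqrt kappa * C < Num.sqrt kappa * e by lra.
  by rewrite ltr_pM2l.
have cs : cauchy_seq d (fun n => J (lam n)).
  move=> e e0; have [M M0 HM] := cauchy e e0.
  have [N0 HN0] := lamev M.
  by exists N0 => m n Nm Nn; apply: HM; [exact: HN0 | exact: HN0].
have [z hz] := complete _ cs.
exists z; split.
- move=> w; have Hz := flsc _ _ hz.
  case fwE: (f w) => [r| |]; last by have := fnN w; rewrite fwE.
    apply/lee_addgt0Pr => e e0; apply: le_trans Hz _.
    rewrite limn_einf_lim; apply: lime_le; first exact: is_cvg_einfs.
    have [N0 HN0] := lamev (Psi kappa d x w / e).
    exists N0 => // n /= Nn.
    apply: le_trans (ereal_inf_lbound _) _; first by exists n => /=.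
    have ln0 := lam0 n.
    have fwfin : f w \is a fin_num by rewrite fwE.
    have := resR (lam n) w ln0 fwfin; rewrite fwE /=.
    have P0 := Psi0 (J (lam n)).
    have HPw : Psi kappa d x w <= e * lam n.
      by have := HN0 n Nn; rewrite ler_pdivrMr // mulrC.
    have : Psi kappa d x w / lam n <= e by rewrite ler_pdivrMr.
    have : 0 <= Psi kappa d x (J (lam n)) / lam n by rewrite divr_ge0 // ltW.
    move=> h1 h2 h3.
    rewrite -(fineK (fin _ ln0)) -EFinD lee_fin -/(F (lam n)); lra.
  by rewrite leey.
- move=> e e0.
  have e20 : 0 < e / 2 by rewrite divr_gt0.
  have [M M0 HM] := cauchy _ e20.
  have [N1 HN1] := hz _ e20.
  have [N2 HN2] := lamev M.
  exists M => l Ml.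
  pose n := maxn N1 N2.
  apply: le_lt_trans (dT _ (J (lam n)) _) _.
  have h1 := HM l (lam n) (ltW Ml) (HN2 n (leq_maxr _ _)).
  have h2 := HN1 n (leq_maxl _ _).
  lra.
Qed.
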